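(* Let $k$ be a field, $A$ a $k$-algebra, $B$ a local $k$-algebra, $X$ an $(A,B)$-bimodule with central $k$-action, finitely generated on both sides, and $\Lambda=\begin{pmatrix}A&X\\0&B\end{pmatrix}$. Fix a minimal generating set $g_1,\dots,g_r$ of the right $B$-module $X$, let $\bar g=[\bar g_1\ \cdots\ \bar g_r]\in M_{1,r}(X/XJ_B)$ with $\bar{(\cdot)}:X\to X/XJ_B$, and let $\pi:X\to M_{r,1}(B/J_B)$ be the composite of $X\to X/XJ_B$ with the inverse of the isomorphism $M_{r,1}(B/J_B)\to X/XJ_B$, $c\mapsto\bar gc$; extend $\pi$ entrywise to $\pi:M_{s,t}(X)\to M_{rs,t}(B/J_B)$. Let $\phi:M_s(A)\to M_{rs}(B/J_B)$ be the $k$-algebra morphism determined by $a(\bar gI_s)=(\bar gI_s)\phi(a)$, where $\bar gI_s\in M_{s,rs}(X/XJ_B)$ is block diagonal with $s$ copies of $\bar g$. Let $s,t\ge0$. (a) For $a\in M_s(A)$, $x\in M_{s,t}(X)$, $b\in M_t(B)$ one has $\pi(axb)=\phi(a)\pi(x)\bar b$, where $\bar b$ is the image of $b$ in $M_t(B/J_B)$; i.e. $\pi$ is a morphism of $M_s(A)^{\rm op}\otimes_kM_t(B)$-modules. (b) If $x\in M_{s,t}(X)$ and the 2-term complex $P_x:=\big([0\ B]^{\oplus t}\xrightarrow{x(\cdot)}[A\ X]^{\oplus s}\big)$ (degrees $-1,0$) is presilting in $K^b(\operatorname{proj}\Lambda)$, then $\pi(x)\in M_{rs,t}(B/J_B)$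 has full rank.
   Context: $J_B$ is the Jacobson radical of $B$, so $B/J_B$ is a division ring and rank of matrices over it is well-defined. Presilting: $\operatorname{Hom}(P_x,P_x[\ell])=0$ for all $\ell>0$. *)

(* Defs.v *)
From HB Require Import structures.
From mathcomp Require Import all_boot all_algebra.
From mathcomp Require Import boolp.
Set Implicit Arguments. Unset Strict Implicit. Unset Printing Implicit Defensive.
Import GRing.Theory.
Local Open Scope ring_scope.

Section BimoduleDefs.
Variables (k : fieldType) (A : algType k) (B : unitAlgType k) (X : lmodType k).
Variables (la : A -> X -> X) (ra : X -> B -> X).

Definition is_bimodule : Prop :=
  ((forall a a' x, la (a + a') x = la a x + la a' x)) /\
      (forall a x x', la a (x + x') = la a x + la a x') /\
      (forall x, la 1 x = x) /\
      (forall a a' x, la (a * a') x = la a (la a' x)) /\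
      (forall x b b', ra x (b + b') = ra x b + ra x b') /\
      (forall x x' b, ra (x + x') b = ra x b + ra x' b) /\
      (forall x, ra x 1 = x) /\
      (forall x b b', ra x (b * b') = ra (ra x b) b') /\
   (forall a x b, la a (ra x b) = ra (la a x) b) /\
       (forall (c : k) a x, la (c *: a) x = c *: la a x) /\
       (forall (c : k) a x, la a (c *: x) = c *: la a x) /\
       (forall (c : k) x b, ra x (c *: b) = c *: ra x b) /\
       (forall (c : k) x b, ra (c *: x) b = c *: ra x b).

Definition left_generates n (h : 'I_n -> X) : Prop :=
  forall x, exists a : 'I_n -> A, x = \sum_i la (a i) (h i).
Definition right_generates n (h : 'I_n -> X) : Prop :=
  forall x, exists b : 'I_n -> B, x = \sum_i ra (h i) (b i).
Definition left_fg : Prop := exists n (h : 'I_n -> X), left_generates h.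
Definition right_fg : Prop := exists n (h : 'I_n -> X), right_generates h.

Definition minimal_right_gen r (g : 'I_r -> X) : Prop :=
  right_generates g /\
  forall r' (g' : 'I_r' -> X), right_generates g' -> (r <= r')%N.

Definition jacobson (j : B) : Prop := forall x z : B, (1 - x * j * z) \is a GRing.unit.

(* local ring (B is nonzero as a unitRingType): x or 1 - x is a unit *)
Definition local_ring : Prop :=
  forall x : B, x \is a GRing.unit \/ (1 - x) \is a GRing.unit.

Definition in_XJ (x : X) : Prop :=
  exists n (xs : 'I_n -> X) (js : 'I_n -> B),
    (forall i, jacobson (js i)) /\ x = \sum_i ra (xs i) (js i).

Variables (D : unitRingType) (q : B -> D).
(* residue_of g x c  <->  xbar = gbar * c  in X/XJ_B, where c in M_{r,1}(B/J_B)
   (B/J_B is represented by D via the surjection q with kernel J_B) *)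
Definition residue_of r (g : 'I_r -> X) (x : X) (c : 'I_r -> D) : Prop :=
  exists b : 'I_r -> B, (forall m, q (b m) = c m) /\
                        in_XJ (x - \sum_m ra (g m) (b m)).

Definition mx_lact s t (a : 'M[A]_s) (x : 'M[X]_(s, t)) : 'M[X]_(s, t) :=
  \matrix_(i, j) \sum_m la (a i m) (x m j).
Definition mx_ract s t (x : 'M[X]_(s, t)) (b : 'M[B]_t) : 'M[X]_(s, t) :=
  \matrix_(i, j) \sum_m ra (x i m) (b m j).

(* Presilting of P_x = ([0 B]^t --x(.)--> [A X]^s) in K^b(proj Lambda):
   Hom(P_x, P_x[l]) = 0 for l >= 2 trivially; Hom(P_x,P_x[1]) = 0 means every
   Lambda-map [0 B]^t -> [A X]^s (= left mult. by y in M_{s,t}(X)) is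
   null-homotopic, i.e. y = a x + x b with a in End([A X]^s) = M_s(A),
   b in End([0 B]^t) = M_t(B). *)
Definition Px_presilting s t (x : 'M[X]_(s, t)) : Prop :=
  forall y : 'M[X]_(s, t), exists (a : 'M[A]_s) (b : 'M[B]_t),
    y = mx_lact a x + mx_ract x b.

End BimoduleDefs.

(* row index of M_{rs}: k <-> (i, l), i : 'I_s the block, l : 'I_r in block *)
Definition blk_idx s r (kk : 'I_(s * r)) : 'I_s * 'I_r :=
  enum_val (cast_ord (esym (mxvec_cast s r)) kk).

Definition pi_mx (X : Type) (D : Type) r (pi : X -> 'cV[D]_r) s t
    (x : 'M[X]_(s, t)) : 'M[D]_(s * r, t) :=
  \matrix_(kk, j) pi (x (blk_idx kk).1 j) (blk_idx kk).2 ord0.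

Definition col_indep (D : unitRingType) m n (M : 'M[D]_(m, n)) (S : {set 'I_n}) : Prop :=
  forall c : 'I_n -> D, (forall i, \sum_(j in S) M i j * c j = 0) ->
    forall j, j \in S -> c j = 0.
Definition rankD (D : unitRingType) m n (M : 'M[D]_(m, n)) : nat :=
  (\max_(S : {set 'I_n} | `[< col_indep M S >]) #|S|)%N.
Definition full_rank (D : unitRingType) m n (M : 'M[D]_(m, n)) : Prop :=
  rankD M = minn m n.

(* Main.v *)
Require Import Defs.
From HB Require Import structures.
From mathcomp Require Import all_boot all_algebra.
From mathcomp Require Import boolp.
Set Implicit Arguments. Unset Strict Implicit. Unset Printing Implicit Defensive.
Import GRing.Theory.
Local Open Scope ring_scope.

Lemma sum_if_eq (R : nzRingType) n (F : 'I_n -> R) (j0 : 'I_n) (t : R) :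
  \sum_j F j * (if j == j0 then t else 0) = F j0 * t.
Proof.
rewrite (bigD1 j0) //= eqxx big1 ?addr0 // => j /negbTE ->; by rewrite mulr0.
Qed.

Lemma homog (R : nzRingType) (iv : R -> R)
  (Hiv : forall d, d != 0 -> iv d * d = 1 /\ d * iv d = 1) m n :
  forall (N : nat) (M : 'I_m -> 'I_n -> R) (Rs : {set 'I_m}) (C : {set 'I_n}),
  #|Rs| = N -> (N < #|C|)%N ->
  exists c : 'I_n -> R, (forall j, j \notin C -> c j = 0) /\ (exists j, c j != 0)
    /\ (forall i, i \in Rs -> \sum_j M i j * c j = 0).
Proof.
elim=> [|N IH] M Rs C HRs HC.
  have /set0Pn [j0 Hj0] : C != set0 by rewrite -card_gt0.
  exists (fun j => if j == j0 then 1 else 0); split; last split.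
  - by move=> j Hj; case: eqP => // E; rewrite E Hj0 in Hj.
  - by exists j0; rewrite eqxx oner_neq0.
  - by move=> i; move/eqP: HRs; rewrite cards_eq0 => /eqP ->; rewrite inE.
have /set0Pn [i0 Hi0] : Rs != set0 by rewrite -card_gt0 HRs.
have HRs' : #|Rs :\ i0| = N by move: HRs; rewrite (cardsD1 i0) Hi0 add1n => -[].
case: (pickP [pred j | (j \in C) && (M i0 j != 0)]) => [j0 /andP [Hj0 Hp] | Hnone].
- set p := M i0 j0.
  pose M' := fun i j => (M i j - M i j0 * iv p * M i0 j).
  have HC' : (N < #|C :\ j0|)%N by move: HC; rewrite (cardsD1 j0 C) Hj0 add1n.
  have [c' [Hsup [[j1 Hj1] Hrow]]] := IH M' _ _ HRs' HC'.
  pose S0 := \sum_j M i0 j * c' j.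
  pose t := - (iv p * S0).
  exists (fun j => c' j + (if j == j0 then t else 0)); split; last split.
  - move=> j Hj.
    have Hj' : j \notin C :\ j0 by rewrite in_setD1 (negbTE Hj) andbF.
    rewrite Hsup //; case: eqP => [E|]; last by rewrite addr0.
    by rewrite E Hj0 in Hj.
  - exists j1.
    have Hj1C : j1 \in C :\ j0 by apply: contraR Hj1 => /Hsup ->.
    move: Hj1C; rewrite !inE => /andP [/negbTE -> _]; by rewrite addr0.
  - have Hsum : forall i, \sum_j M i j * (c' j + (if j == j0 then t else 0))
        = \sum_j M i j * c' j + M i j0 * t.
      by move=> i; rewrite -sum_if_eq -big_split /=; apply: eq_bigr => j _; rewrite mulrDr.
    move=> i Hi; rewrite Hsum.
    case: (eqVneq i i0) => [->|Hne].
      rewrite /t -/S0 mulrN mulrA (proj2 (Hiv _ Hp)) mul1r subrr //.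
    have Hi' : i \in Rs :\ i0 by rewrite !inE Hne Hi.
    have := Hrow i Hi'.
    under eq_bigr => j _ do rewrite /M' mulrBl -!mulrA.
    rewrite sumrB -mulr_sumr -mulr_sumr -/S0 => E.
    by rewrite /t mulrN; exact: E.
- have [c [Hsup [Hnz Hrow]]] := IH M _ _ HRs' (ltnW HC).
  exists c; split; [by []|split; first by []].
  move=> i Hi; case: (eqVneq i i0) => [->|Hne]; last first.
    by apply: Hrow; rewrite !inE Hne Hi.
  apply: big1 => j _.
  case: (boolP (j \in C)) => HjC; last by rewrite Hsup // mulr0.
  move: (Hnone j); rewrite /= HjC /= => /negbFE /eqP ->; by rewrite mul0r.
Qed.


Lemma homogL (D : unitRingType) (Hdiv : forall d : D, d != 0 -> d \is a GRing.unit)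
  m n (M : 'M[D]_(m, n)) (Rs : {set 'I_m}) (C : {set 'I_n}) :
  (#|C| < #|Rs|)%N ->
  exists u : 'I_m -> D, (exists i, u i != 0)
    /\ (forall j, j \in C -> \sum_i u i * M i j = 0).
Proof.
move=> H.
have Hiv : forall d : D^c, d != 0 -> (@GRing.inv D d : D^c) * d = 1 /\ d * (@GRing.inv D d : D^c) = 1.
  move=> d /Hdiv Hd; split; first [exact: (mulrV Hd) | exact: (mulVr Hd)].
pose M' := fun (j : 'I_n) (i : 'I_m) => (M i j : D^c).
have [c [_ [Hnz Hrow]]] := homog (R := D^c) (iv := fun d : D => d^-1) Hiv M' (erefl #|C|) H.
exists c; split=> // j Hj; exact: (Hrow j Hj).
Qed.


Lemma fullrank_of (D : unitRingType) (Hdiv : forall d : D, d != 0 -> d \is a GRing.unit)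
  m n (M : 'M[D]_(m, n)) :
  (forall Y : 'M[D]_(m, n), exists (P : 'M[D]_m) (Q : 'M[D]_n), Y = P *m M + M *m Q) ->
  full_rank M.
Proof.
move=> HY.
have Hiv : forall d : D, d != 0 -> d^-1 * d = 1 /\ d * d^-1 = 1.
  by move=> d /Hdiv Hd; split; [exact: mulVr|exact: mulrV].
rewrite /full_rank /rankD; apply/eqP; rewrite eqn_leq; apply/andP; split.
  apply/bigmax_leqP => S /asboolP Hind; rewrite leq_min; apply/andP; split; last first.
    by have := max_card (mem S); rewrite card_ord.
  rewrite leqNgt; apply/negP => Hlt.
  have HS : (#|[set: 'I_m]| < #|S|)%N by rewrite cardsT card_ord.
  have [c [Hsup [[j0 Hj0] Hrow]]] := homog Hiv (fun i j => M i j) (erefl _) HS.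
  have Hj0S : j0 \in S by apply: contraR Hj0 => /Hsup ->.
  have : c j0 = 0.
    apply: (Hind c) => // i; rewrite -[RHS](Hrow i (in_setT i)) big_mkcond.
    by apply: eq_bigr => j _; case: ifP => // /negbT /Hsup ->; rewrite mulr0.
  by move/eqP; rewrite (negbTE Hj0).
pose PS := [pred S : {set 'I_n} | `[< col_indep M S >]].
have PS0 : PS set0 by apply/asboolP => c _ j; rewrite inE.
have HPS : (0 < #|PS|)%N by apply/card_gt0P; exists set0.
have [S0 HS0 Hmax] := @eq_bigmax_cond _ PS (fun S : {set 'I_n} => #|S|) HPS.
have Emax : (\max_(S | `[< col_indep M S >]) #|S|)%N = #|S0|.
  by rewrite -Hmax; apply: eq_bigl.
rewrite Emax leqNgt; apply/negP => Hlt.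
have Hind0 : col_indep M S0 by apply/asboolP.
have Hm : (#|S0| < m)%N by apply: leq_trans Hlt (geq_minl _ _).
have Hn : (#|S0| < n)%N by apply: leq_trans Hlt (geq_minr _ _).
have Hspan : forall j, j \notin S0 -> exists k : 'I_n -> D,
    (forall l, l \notin S0 -> k l = 0) /\ forall i, M i j = \sum_l M i l * k l.
  move=> j Hj; case: (pselect (exists k : 'I_n -> D,
    (forall l, l \notin S0 -> k l = 0) /\ forall i, M i j = \sum_l M i l * k l)) => // Hno.
  exfalso.
  have Hind1 : col_indep M (j |: S0).
    move=> c Hc.
    have Hsplit : forall i, \sum_(l in j |: S0) M i l * c l
        = M i j * c j + \sum_(l in S0) M i l * c l.
      move=> i; rewrite (bigD1 j) ?setU11 //=; congr (_ + _).
      apply: eq_bigl => l; rewrite !inE.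
      by case: (eqVneq l j) => [->|] /=; rewrite ?(negbTE Hj) ?andbT ?andbF.
    have Hcj : c j = 0.
      apply/eqP; apply: contraT => Hcj; exfalso; apply: Hno.
      exists (fun l => if l \in S0 then - (c l * (c j)^-1) else 0); split.
        by move=> l /negbTE ->.
      move=> i.
      have -> : \sum_l M i l * (if l \in S0 then - (c l / c j) else 0)
          = \sum_(l in S0) M i l * - (c l / c j).
        by rewrite [RHS]big_mkcond; apply: eq_bigr => l _; case: ifP; rewrite ?mulr0.
      have E := Hc i; rewrite Hsplit in E.
      have E2 : M i j * c j = - \sum_(l in S0) M i l * c l.
        by apply/eqP; rewrite -addr_eq0 E.
      have -> : M i j = M i j * c j * (c j)^-1 by rewrite -mulrA (proj2 (Hiv _ Hcj)) mulr1.
      rewrite E2 mulNr mulr_suml -sumrN; apply: eq_bigr => l _.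
      by rewrite mulrN mulrA.
    have HS : forall l, l \in S0 -> c l = 0.
      apply: Hind0 => i; have := Hc i; rewrite Hsplit Hcj mulr0 add0r //.
    move=> l; rewrite !inE => /orP [/eqP ->|]; [exact: Hcj|exact: HS].
  have : (#|j |: S0| <= #|S0|)%N.
    rewrite -Emax; apply: (leq_bigmax_cond (F := fun S : {set 'I_n} => #|S|)).
    exact/asboolP.
  by rewrite cardsU1 Hj add1n ltnn.
have HS0m : (#|S0| < #|[set: 'I_m]|)%N by rewrite cardsT card_ord.
have [u [[i0 Hi0] Hu]] := homogL Hdiv M HS0m.
have HuM : forall j, \sum_i u i * M i j = 0.
  move=> j; case: (boolP (j \in S0)) => Hj; first exact: Hu.
  have [k [Hk HMk]] := Hspan j Hj.
  under eq_bigr => i _ do rewrite HMk mulr_sumr.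
  rewrite exchange_big /=; apply: big1 => l _.
  case: (boolP (l \in S0)) => Hl; last by rewrite big1 // => i _; rewrite (Hk l Hl) !mulr0.
  transitivity ((\sum_i u i * M i l) * k l); last by rewrite (Hu l Hl) mul0r.
  by rewrite mulr_suml; apply: eq_bigr => i _; rewrite mulrA.
have [j1 Hj1] : exists j1, j1 \notin S0.
  have : (0 < #|~: S0|)%N.
    have E := cardsC S0; rewrite card_ord in E.
    rewrite lt0n; apply/eqP => E0; move: E; rewrite E0 addn0 => E; by rewrite E ltnn in Hn.
  by case/card_gt0P => j1; rewrite inE => Hj1; exists j1.
have [k1 [Hk1 HMk1]] := Hspan j1 Hj1.
pose c := fun l => (if l == j1 then 1 else 0) - k1 l.
have Hc : forall i, \sum_l M i l * c l = 0.
  move=> i; under eq_bigr => l _ do rewrite /c mulrBr.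
  by rewrite sumrB sum_if_eq mulr1 -HMk1 subrr.
pose uu : 'rV[D]_m := \row_i u i.
pose cc : 'cV[D]_n := \col_l c l.
have HuuM : uu *m M = 0 by apply/matrixP => a b; rewrite !mxE -[RHS](HuM b); apply: eq_bigr => i _; rewrite mxE.
have HMcc : M *m cc = 0 by apply/matrixP => a b; rewrite !mxE -[RHS](Hc a); apply: eq_bigr => i _; rewrite mxE.
have [P [Q EY]] := HY (delta_mx i0 j1).
have E0 : uu *m delta_mx i0 j1 *m cc = 0.
  rewrite EY mulmxDr mulmxDl -!mulmxA HMcc mulmx0 !mulmxA HuuM !mul0mx. by rewrite mulmx0 addr0.
have : (uu *m delta_mx i0 j1 *m cc) 0 0 = u i0 * c j1.
  rewrite mxE.
  have Hin : forall l, (uu *m delta_mx i0 j1) 0 l = u i0 * (if l == j1 then 1 else 0).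
    move=> l; rewrite mxE (bigD1 i0) //= big1 ?addr0; last first.
      by move=> i /negbTE Hi; rewrite !mxE Hi mulr0.
    by rewrite !mxE eqxx /=; case: eqP.
  under eq_bigr => l _ do rewrite Hin mxE -mulrA.
  rewrite -mulr_sumr; congr (_ * _).
  rewrite (bigD1 j1) //= eqxx mul1r big1 ?addr0 // => l /negbTE ->; by rewrite mul0r.
rewrite E0 mxE /c eqxx Hk1 // subr0 mulr1 => /esym /eqP.
by rewrite (negbTE Hi0).
Qed.


Lemma blk_mi s r (i : 'I_s) (j : 'I_r) : blk_idx (mxvec_index i j) = (i, j).
Proof. by rewrite /blk_idx /mxvec_index cast_ordK enum_rankK. Qed.

Lemma mi_blk s r (kk : 'I_(s * r)) :
  mxvec_index (blk_idx kk).1 (blk_idx kk).2 = kk.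
Proof. by rewrite /blk_idx /mxvec_index -surjective_pairing enum_valK cast_ordKV. Qed.

Section Local.
Variables (k : fieldType) (B : unitAlgType k).
Hypothesis Hloc : local_ring B.

Lemma idem_local (e : B) : e * e = e -> e = 0 \/ e = 1.
Proof.
move=> He; case: (Hloc e) => Hu.
  right; by rewrite -[e](mulKr Hu) He mulVr.
left; have : (1 - e) * e = 0 by rewrite mulrBl mul1r He subrr.
by move=> E; rewrite -[e](mulKr Hu) E mulr0.
Qed.

Lemma linv_unit (u b : B) : u * b = 1 -> b \is a GRing.unit.
Proof.
move=> H; case: (idem_local (e := b * u)).
- by rewrite mulrA -(mulrA b) H mulr1.
- move=> E; exfalso; move/eqP: (@oner_neq0 B); apply.
  by rewrite -H -[u * b]mulr1 -H mulrA -(mulrA u) E mulr0 mul0r.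
- by move=> E; apply/unitrP; exists u.
Qed.

Lemma rinv_unit (u b : B) : b * u = 1 -> b \is a GRing.unit.
Proof.
move=> H; case: (idem_local (e := u * b)).
- by rewrite mulrA -(mulrA u) H mulr1.
- move=> E; exfalso; move/eqP: (@oner_neq0 B); apply.
  by rewrite -H -[b * u]mulr1 -H mulrA -(mulrA b) E mulr0 mul0r.
- by move=> E; apply/unitrP; exists u.
Qed.

Lemma mid_unit (x b z : B) : x * b * z \is a GRing.unit -> b \is a GRing.unit.
Proof.
move=> H.
have Hz : z \is a GRing.unit.
  apply: (@linv_unit ((x * b * z)^-1 * (x * b))).
  set w := (x * b * z)^-1; by rewrite -mulrA /w mulVr.
have Hx : x \is a GRing.unit.
  apply: (@rinv_unit (b * z * (x * b * z)^-1)).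
  set w := (x * b * z)^-1; by rewrite !mulrA /w mulrV.
by move: H; rewrite (unitrMl _ Hz) (unitrMr _ Hx).
Qed.

Lemma nonunit_jac (b : B) : b \isn't a GRing.unit -> jacobson b.
Proof.
move=> Hb x z; case: (Hloc (1 - x * b * z)) => // H; exfalso.
move: H; rewrite opprB addrC subrK => /mid_unit; by rewrite (negbTE Hb).
Qed.
End Local.


Section Bimod.
Variables (k : fieldType) (A : algType k) (B : unitAlgType k)
    (X : lmodType k) (la : A -> X -> X) (ra : X -> B -> X)
    (D : unitRingType) (q : {rmorphism B -> D})
    (r : nat) (g : 'I_r -> X) (pi : X -> 'cV[D]_r).
Hypotheses (Hbi : is_bimodule la ra) (Hloc : local_ring B)
  (Hq : forall d : D, exists b : B, q b = d)
  (HJ : forall b : B, q b = 0 <-> jacobson b)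
  (Hmin : minimal_right_gen ra g)
  (Hpi : forall x : X, residue_of ra q g x (fun m => pi x m ord0)).

Lemma la_addr a x x' : la a (x + x') = la a x + la a x'.
Proof. by case: Hbi => _ [H _]. Qed.
Lemma ra_addr x b b' : ra x (b + b') = ra x b + ra x b'.
Proof. by case: Hbi => _ [_ [_ [_ [H _]]]]. Qed.
Lemma ra_addl x x' b : ra (x + x') b = ra x b + ra x' b.
Proof. by case: Hbi => _ [_ [_ [_ [_ [H _]]]]]. Qed.
Lemma ra_mul x b b' : ra x (b * b') = ra (ra x b) b'.
Proof. by case: Hbi => _ [_ [_ [_ [_ [_ [_ [H _]]]]]]]. Qed.
Lemma la_ra a x b : la a (ra x b) = ra (la a x) b.
Proof. by case: Hbi => _ [_ [_ [_ [_ [_ [_ [_ [H _]]]]]]]]. Qed.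

Lemma self0 (V : zmodType) (v : V) : v = v + v -> v = 0.
Proof. by move/(congr1 (fun y => y - v)); rewrite subrr addrK => E; rewrite E. Qed.
Lemma la0 a : la a 0 = 0.
Proof. by apply: self0; rewrite -la_addr addr0. Qed.
Lemma ra0r x : ra x 0 = 0.
Proof. by apply: self0; rewrite -ra_addr addr0. Qed.
Lemma ra0l b : ra 0 b = 0.
Proof. by apply: self0; rewrite -ra_addl addr0. Qed.
Lemma raNr x b : ra x (- b) = - ra x b.
Proof. by apply/eqP; rewrite -addr_eq0 -ra_addr addNr ra0r. Qed.
Lemma raNl x b : ra (- x) b = - ra x b.
Proof. by apply/eqP; rewrite -addr_eq0 -ra_addl addNr ra0l. Qed.
Lemma raBr x b b' : ra x (b - b') = ra x b - ra x b'.
Proof. by rewrite ra_addr raNr. Qed.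

Lemma la_sum (I : finType) a (F : I -> X) : la a (\sum_i F i) = \sum_i la a (F i).
Proof. exact: (big_morph (la a) (la_addr a) (la0 a)). Qed.
Lemma ra_sumr (I : finType) x (F : I -> B) : ra x (\sum_i F i) = \sum_i ra x (F i).
Proof. exact: (big_morph (ra x) (ra_addr x) (ra0r x)). Qed.
Lemma ra_suml (I : finType) b (F : I -> X) : ra (\sum_i F i) b = \sum_i ra (F i) b.
Proof. exact: (big_morph (ra^~ b) (fun x y => ra_addl x y b) (ra0l b)). Qed.

Definition rep (x : X) (c : 'I_r -> D) : Prop :=
  exists bb : 'I_r -> B, (forall l, q (bb l) = c l) /\ x = \sum_l ra (g l) (bb l).

Lemma XJ_g x : in_XJ ra x -> exists j : 'I_r -> B,
  (forall l, q (j l) = 0) /\ x = \sum_l ra (g l) (j l).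
Proof.
case=> n [xs [js [Hj ->]]].
have [gam Hgam] := @fin_all_exists _ (fun _ => 'I_r -> B)
  (fun i gm => xs i = \sum_l ra (g l) (gm l)) (fun i => proj1 Hmin (xs i)).
exists (fun l => \sum_i gam i l * js i); split.
  move=> l; rewrite rmorph_sum big1 // => i _.
  by rewrite rmorphM (proj2 (HJ _) (Hj i)) mulr0.
under eq_bigr => i _ do rewrite Hgam ra_suml.
rewrite exchange_big /=; apply: eq_bigr => l _.
by rewrite ra_sumr; apply: eq_bigr => i _; rewrite ra_mul.
Qed.

Lemma residue_rep x c : residue_of ra q g x c -> rep x c.
Proof.
case=> bb [Hb /XJ_g [j [Hj Ej]]].
exists (fun l => bb l + j l); split.
  by move=> l; rewrite rmorphD Hj addr0.
under eq_bigr => l _ do rewrite ra_addr.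
by rewrite big_split /= -Ej addrC subrK.
Qed.


Lemma div_D (d : D) : d != 0 -> d \is a GRing.unit.
Proof.
have [b <-] := Hq d => Hnz.
case: (boolP (b \is a GRing.unit)) => [/(rmorph_unit q)//|/(nonunit_jac Hloc)/(proj2 (HJ _)) E].
by rewrite E eqxx in Hnz.
Qed.

Lemma indep (d : 'I_r -> B) : \sum_l ra (g l) (d l) = 0 -> forall l, q (d l) = 0.
Proof.
move=> H l0; apply/eqP; apply: contraT => Hnz; exfalso.
have Hu : d l0 \is a GRing.unit.
  case: (boolP (d l0 \is a GRing.unit)) => // /(nonunit_jac Hloc)/(proj2 (HJ _)) E.
  by rewrite E eqxx in Hnz.
pose g' := fun i : 'I_r.-1 => g (lift l0 i).
have Hd : \sum_i ra (g' i) (d (lift l0 i)) = - ra (g l0) (d l0).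
  apply/eqP; rewrite -addr_eq0; apply/eqP.
  by rewrite -[RHS]H (bigD1_ord l0) //= addrC.
have Hgen : right_generates ra g'.
  move=> x; have [bx Hx] := proj1 Hmin x.
  set w := (d l0)^-1 * bx l0.
  exists (fun i => bx (lift l0 i) - d (lift l0 i) * w).
  under eq_bigr => i _ do rewrite raBr ra_mul.
  rewrite sumrB -ra_suml Hd raNl opprK -ra_mul /w mulrA (mulrV Hu) mul1r.
  by rewrite Hx (bigD1_ord l0) //= addrC.
have := proj2 Hmin _ g' Hgen.
by rewrite leqNgt ltn_predL (leq_ltn_trans (leq0n _) (ltn_ord l0)).
Qed.

Lemma pi_rep x c : rep x c -> forall l, pi x l ord0 = c l.
Proof.
have [bb [Hbb Ex]] := residue_rep (Hpi x).
case=> bb' [Hbb' Ex'] l.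
have H0 : \sum_l ra (g l) (bb l - bb' l) = 0.
  by under eq_bigr => l' _ do rewrite raBr; rewrite sumrB -Ex -Ex' subrr.
by have := indep H0 l; rewrite rmorphB Hbb Hbb' => /eqP; rewrite subr_eq0 => /eqP.
Qed.

Lemma rep_sum (I : finType) (F : I -> X) (c : I -> 'I_r -> D) :
  (forall i, rep (F i) (c i)) -> rep (\sum_i F i) (fun l => \sum_i c i l).
Proof.
move=> H; have [bb Hbb] := @fin_all_exists I (fun _ => 'I_r -> B)
  (fun i bi => (forall l, q (bi l) = c i l) /\ F i = \sum_l ra (g l) (bi l)) H.
exists (fun l => \sum_i bb i l); split.
  by move=> l; rewrite rmorph_sum; apply: eq_bigr => i _; exact: (proj1 (Hbb i)).
under eq_bigr => i _ do rewrite (proj2 (Hbb i)).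
by rewrite exchange_big; apply: eq_bigr => l _; rewrite ra_sumr.
Qed.

Lemma rep_ra x c b : rep x c -> rep (ra x b) (fun l => c l * q b).
Proof.
case=> bb [Hbb ->]; exists (fun l => bb l * b); split.
  by move=> l; rewrite rmorphM Hbb.
by rewrite ra_suml; apply: eq_bigr => l _; rewrite ra_mul.
Qed.

Lemma rep_add x y c d : rep x c -> rep y d -> rep (x + y) (fun l => c l + d l).
Proof.
case=> bb [Hbb ->] [bb' [Hbb' ->]]; exists (fun l => bb l + bb' l); split.
  by move=> l; rewrite rmorphD Hbb Hbb'.
by rewrite -big_split; apply: eq_bigr => l _; rewrite ra_addr.
Qed.

Lemma rep_ext x c c' : rep x c -> (forall l, c l = c' l) -> rep x c'.
Proof. by case=> bb [Hbb Ex] E; exists bb; split=> // l; rewrite Hbb E. Qed.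

Lemma rep_pi x : rep x (fun l => pi x l ord0).
Proof. exact: residue_rep (Hpi x). Qed.

Section Phi.
Variables (s t : nat) (phi : 'M[A]_s -> 'M[D]_(s * r)).
Hypothesis Hphi : forall (a : 'M[A]_s) (i : 'I_s) (kk : 'I_(s * r)),
     residue_of ra q g (la (a i (blk_idx kk).1) (g (blk_idx kk).2))
       (fun m => phi a (mxvec_index i m) kk).

Lemma rep_g_la (a : 'M[A]_s) (i m : 'I_s) (l : 'I_r) :
  rep (la (a i m) (g l)) (fun l' => phi a (mxvec_index i l') (mxvec_index m l)).
Proof. by have := Hphi a i (mxvec_index m l); rewrite blk_mi /= => /residue_rep. Qed.

Lemma rep_la (a : 'M[A]_s) (i m : 'I_s) x c : rep x c ->
  rep (la (a i m) x) (fun l' => \sum_l phi a (mxvec_index i l') (mxvec_index m l) * c l).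
Proof.
case=> bb [Hbb ->]; rewrite la_sum; under eq_bigr => l _ do rewrite la_ra.
apply: (rep_ext (rep_sum (fun l => rep_ra (bb l) (rep_g_la a i m l)))) => l' /=.
by apply: eq_bigr => l _; rewrite Hbb.
Qed.

Lemma pi_lact a (x : 'M[X]_(s, t)) : pi_mx pi (mx_lact la a x) = phi a *m pi_mx pi x.
Proof.
apply/matrixP => kk j; rewrite !mxE.
have H := rep_sum (fun m => rep_la a (blk_idx kk).1 m (rep_pi (x m j))).
rewrite (pi_rep H) /= mi_blk.
rewrite (reindex (fun p : 'I_s * 'I_r => mxvec_index p.1 p.2)) /=; last first.
  exists (@blk_idx s r) => [[i l] _|kk' _]; [by rewrite blk_mi|by rewrite mi_blk].
rewrite -(pair_bigA _ (fun m l => phi a kk (mxvec_index m l) * pi_mx pi x (mxvec_index m l) j)).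
by apply: eq_bigr => m _; apply: eq_bigr => l _; rewrite !mxE blk_mi.
Qed.

Lemma pi_ract (x : 'M[X]_(s, t)) b : pi_mx pi (mx_ract ra x b) = pi_mx pi x *m map_mx q b.
Proof.
apply/matrixP => kk j; rewrite !mxE.
have H := rep_sum (fun n => rep_ra (b n j) (rep_pi (x (blk_idx kk).1 n))).
by rewrite (pi_rep H) /=; apply: eq_bigr => n _; rewrite !mxE.
Qed.

Lemma pi_add (y1 y2 : 'M[X]_(s, t)) : pi_mx pi (y1 + y2) = pi_mx pi y1 + pi_mx pi y2.
Proof.
apply/matrixP => kk j; rewrite !mxE.
by rewrite (pi_rep (rep_add (rep_pi _) (rep_pi _))).
Qed.

Lemma pi_surj (Y : 'M[D]_(s * r, t)) : exists y, pi_mx pi y = Y.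
Proof.
have Hxij : forall p : 'I_s * 'I_t, exists xx : X,
    forall l, pi xx l ord0 = Y (mxvec_index p.1 l) p.2.
  move=> p; have [bb Hbb] := @fin_all_exists 'I_r (fun _ => B)
    (fun l bl => q bl = Y (mxvec_index p.1 l) p.2) (fun l => Hq _).
  exists (\sum_l ra (g l) (bb l)); apply: pi_rep; by exists bb.
have [f Hf] := @fin_all_exists _ (fun _ => X) _ Hxij.
exists (\matrix_(i, j) f (i, j)); apply/matrixP => kk j.
by rewrite !mxE Hf /= mi_blk.
Qed.

Lemma main_sec :
  (forall (a : 'M[A]_s) (x : 'M[X]_(s, t)) (b : 'M[B]_t),
     pi_mx pi (mx_ract ra (mx_lact la a x) b) = phi a *m pi_mx pi x *m map_mx q b)
  /\
  (forall x : 'M[X]_(s, t), Px_presilting la ra x -> full_rank (pi_mx pi x)).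
Proof.
split.
  by move=> a x b; rewrite pi_ract pi_lact.
move=> x Hx; apply: fullrank_of; first exact: div_D.
move=> Y; have [y <-] := pi_surj Y; have [a [b ->]] := Hx y.
by exists (phi a), (map_mx q b); rewrite pi_add pi_lact pi_ract.
Qed.

End Phi.
End Bimod.


Theorem proposition3p11 (k : fieldType) (A : algType k) (B : unitAlgType k)
    (X : lmodType k) (la : A -> X -> X) (ra : X -> B -> X)
    (D : unitRingType) (q : {rmorphism B -> D})
    (r : nat) (g : 'I_r -> X) (pi : X -> 'cV[D]_r) :
  is_bimodule la ra -> local_ring B -> left_fg la -> right_fg ra ->
  (forall d : D, exists b : B, q b = d) ->
  (forall b : B, q b = 0 <-> jacobson b) ->
  minimal_right_gen ra g ->
  (forall x : X, residue_of ra q g x (fun m => pi x m ord0)) ->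
  forall (s t : nat) (phi : 'M[A]_s -> 'M[D]_(s * r)),
  (forall (a : 'M[A]_s) (i : 'I_s) (kk : 'I_(s * r)),
     residue_of ra q g (la (a i (blk_idx kk).1) (g (blk_idx kk).2))
       (fun m => phi a (mxvec_index i m) kk)) ->
  (forall (a : 'M[A]_s) (x : 'M[X]_(s, t)) (b : 'M[B]_t),
     pi_mx pi (mx_ract ra (mx_lact la a x) b) = phi a *m pi_mx pi x *m map_mx q b)
  /\
  (forall x : 'M[X]_(s, t), Px_presilting la ra x -> full_rank (pi_mx pi x)).
Proof.
move=> Hbi Hloc _ _ Hq HJ Hmin Hpi s t phi Hphi.
exact: (main_sec Hbi Hloc Hq HJ Hmin Hpi t Hphi).
Qed.
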